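(* Let $\mathbb{F}\in\{\mathbb{R},\mathbb{C}\}$, $A\in\mathbb{F}^{m\times n}$ with $\|A\|_{\infty,col}\le1$, $\mu>0$, $x_0\in\mathbb{F}^n$ with $S=\mathrm{supp}\,x_0$ and $\mathrm{card}(x_0)=K$, $\epsilon\in\mathbb{F}^m$ and $b=Ax_0+\epsilon$. Let $N\ge2K$ with $\beta_N>0$, and assume $\|\epsilon\|_2<\beta_N^2\sqrt{\mu}$ and $$|x_{0,j}|>\Big(\frac{1}{\beta_N^2}+1\Big)\sqrt{\mu}\quad\text{for all }j\in S.$$ Then the oracle solution $x'=x_S$ is the unique global minimizer of $\mathcal{K}_{reg}$ as well as of $\mathcal{K}$, it satisfies $\mathrm{supp}\,x'=\mathrm{supp}\,x_0$ and $\|x'-x_0\|_2\le\|\epsilon\|_2/\beta_K$, and every stationary point $x''\neq x'$ of $\mathcal{K}_{reg}$ satisfies $\mathrm{card}(x'')>N-K$.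
   Context: $\|A\|_{\infty,col}=\max_i\|a_i\|_2$ over the columns $a_i$ of $A$. $\mathrm{card}(x)$ is the number of nonzero entries; $\beta_k=\inf\{\|Ax\|_2/\|x\|_2:x\ne0,\ \mathrm{card}(x)\le k\}$. $\mathcal{K}(x)=\mu\,\mathrm{card}(x)+\|Ax-b\|_2^2$ and $\mathcal{K}_{reg}(x)=\mathcal{Q}_2(\mu\,\mathrm{card})(x)+\|Ax-b\|_2^2$ with $\mathcal{Q}_2(\mu\,\mathrm{card})(x)=\sum_{j=1}^n\big(\mu-(\max\{\sqrt{\mu}-|x_j|,0\})^2\big)$. $A_S$ denotes $A$ with all columns with index outside $S$ set to zero; the oracle solution is $x_S=(A_S^*A_S)^\dagger A_S^*b$ ($\dagger$ Moore–Penrose inverse, $A^*$ conjugate transpose). A stationary point of a function $g$ is a point $x$ with $0$ in the Fréchet subdifferential $\hat\partial g(x)$, i.e. the set of $v$ with $\liminf_{y\to x,y\ne x}(g(y)-g(x)-\mathrm{Re}\langle v,y-x\rangle)/\|y-x\|\ge0$. *)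

(* Defs.v *)
From HB Require Import structures.
From mathcomp Require Import all_boot all_order all_algebra.
From mathcomp Require Import complex.
From mathcomp Require Import all_classical all_reals.
Set Implicit Arguments. Unset Strict Implicit. Unset Printing Implicit Defensive.
Import Order.TTheory GRing.Theory Num.Theory.
Local Open Scope ring_scope.

Section Defs.
Variable R : realType.
Local Notation C := (complex R).

(* Scalar field selector: realF = true means F = R (entries with zero
   imaginary part), realF = false means F = C. *)
Definition inF (realF : bool) (z : C) : Prop := if realF then complex.Im z = 0 else True.
Definition vecF (realF : bool) {n : nat} (x : 'cV[C]_n) : Prop :=
  forall i, inF realF (x i 0).
Definition matF (realF : bool) {m n : nat} (A : 'M[C]_(m, n)) : Prop :=
  forall i j, inF realF (A i j).

Definition cabs (z : C) : R := Num.sqrt (complex.Re z ^+ 2 + complex.Im z ^+ 2).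
Definition norm2 {n : nat} (x : 'cV[C]_n) : R :=
  Num.sqrt (\sum_(i < n) cabs (x i 0) ^+ 2).
Definition reip {n : nat} (v w : 'cV[C]_n) : R :=
  complex.Re (\sum_(i < n) (conjc (v i 0)) * w i 0).

Definition supp {n : nat} (x : 'cV[C]_n) : {set 'I_n} := [set i | x i 0 != 0].
Definition cardv {n : nat} (x : 'cV[C]_n) : nat := #|supp x|.

Definition colnorm {m n : nat} (A : 'M[C]_(m, n)) : R :=
  \big[Num.max/0]_(j < n) norm2 (col j A).

Definition beta (realF : bool) {m n : nat} (A : 'M[C]_(m, n)) (k : nat) : R :=
  inf [set t : R | exists x : 'cV[C]_n,
        [/\ vecF realF x, x != 0, (cardv x <= k)%N & t = norm2 (A *m x) / norm2 x]].

Definition Kfun {m n : nat} (A : 'M[C]_(m, n)) (b : 'cV[C]_m) (mu : R)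
  (x : 'cV[C]_n) : R :=
  mu * (cardv x)%:R + norm2 (A *m x - b) ^+ 2.
Definition Q2card {n : nat} (mu : R) (x : 'cV[C]_n) : R :=
  \sum_(j < n) (mu - (Num.max (Num.sqrt mu - cabs (x j 0)) 0) ^+ 2).
Definition Kreg {m n : nat} (A : 'M[C]_(m, n)) (b : 'cV[C]_m) (mu : R)
  (x : 'cV[C]_n) : R :=
  Q2card mu x + norm2 (A *m x - b) ^+ 2.

Definition restrict_cols {m n : nat} (A : 'M[C]_(m, n)) (S : {set 'I_n}) :
  'M[C]_(m, n) := \matrix_(i, j) (if j \in S then A i j else 0).
Definition adjoint {m n : nat} (A : 'M[C]_(m, n)) : 'M[C]_(n, m) :=
  map_mx (@conjc R) A^T.

Definition is_MP_inverse {m n : nat} (M : 'M[C]_(m, n)) (X : 'M[C]_(n, m)) : Prop :=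
  [/\ M *m X *m M = M, X *m M *m X = X,
      adjoint (M *m X) = M *m X & adjoint (X *m M) = X *m M].

Definition unique_global_minimizer (realF : bool) {n : nat}
  (g : 'cV[C]_n -> R) (x : 'cV[C]_n) : Prop :=
  vecF realF x /\ forall y, vecF realF y -> y <> x -> g x < g y.

(* Frechet subdifferential over F^n: v such that
   liminf_{y -> x, y <> x} (g y - g x - Re<v, y - x>)/||y - x|| >= 0,
   written out with epsilon/delta. *)
Definition frechet_subdiff (realF : bool) {n : nat} (g : 'cV[C]_n -> R)
  (x v : 'cV[C]_n) : Prop :=
  vecF realF v /\
  forall eps : R, 0 < eps -> exists2 delta : R, 0 < delta &
    forall y : 'cV[C]_n, vecF realF y -> 0 < norm2 (y - x) < delta ->
      - eps <= (g y - g x - reip v (y - x)) / norm2 (y - x).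

Definition stationary (realF : bool) {n : nat} (g : 'cV[C]_n -> R)
  (x : 'cV[C]_n) : Prop :=
  vecF realF x /\ frechet_subdiff realF g x 0.

End Defs.

(* Main.v *)
Require Import Defs.
From HB Require Import structures.
From mathcomp Require Import all_boot all_order all_algebra.
From mathcomp Require Import complex.
From mathcomp Require Import all_classical all_reals.
From mathcomp Require Import ring lra.
Import Order.TTheory GRing.Theory Num.Theory.
Local Open Scope ring_scope.
Set Implicit Arguments. Unset Strict Implicit. Unset Printing Implicit Defensive.


Section Basic.
Variable R : realType.
Local Notation C := (complex R).

Lemma cabsE (a b : R) : cabs (a +i* b)%C = Num.sqrt (a ^+ 2 + b ^+ 2).
Proof. by []. Qed.

Lemma cabs_normc (z : C) : cabs z = Normc.normc z.
Proof. by case: z. Qed.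

Lemma cabs_ge0 (z : C) : 0 <= cabs z.
Proof. exact: sqrtr_ge0. Qed.

Lemma cabs2 (z : C) : cabs z ^+ 2 = complex.Re z ^+ 2 + complex.Im z ^+ 2.
Proof. by rewrite sqr_sqrtr // addr_ge0 // sqr_ge0. Qed.

Lemma cabs0 : cabs (0 : C) = 0.
Proof. by rewrite /cabs /= expr0n /= addr0 sqrtr0. Qed.

Lemma cabs_eq0 (z : C) : (cabs z == 0) = (z == 0).
Proof.
apply/eqP/eqP; last by move->; rewrite cabs0.
by rewrite cabs_normc => /Normc.eq0_normc.
Qed.

Lemma cabsM (z w : C) : cabs (z * w) = cabs z * cabs w.
Proof. by rewrite !cabs_normc Normc.normcM. Qed.

Lemma cabsD (z w : C) : cabs (z + w) <= cabs z + cabs w.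
Proof. by rewrite !cabs_normc le_normcD. Qed.

Lemma cabsN (z : C) : cabs (- z) = cabs z.
Proof. by rewrite !cabs_normc normcN. Qed.

Lemma cabsB (z w : C) : cabs (z - w) = cabs (w - z).
Proof. by rewrite -cabsN opprB. Qed.

Lemma cabs_conj (z : C) : cabs (z^*)%C = cabs z.
Proof. by case: z => a b; rewrite /cabs /= sqrrN. Qed.

Lemma cabs_real (r : R) : cabs (r%:C)%C = `|r|.
Proof. by rewrite /cabs /= expr0n /= addr0 sqrtr_sqr. Qed.

Lemma Re_le_cabs (z : C) : complex.Re z <= cabs z.
Proof.
case: z => a b /=; rewrite /cabs /=.
apply: le_trans (ler_norm a) _; rewrite -sqrtr_sqr; apply: ler_wsqrtr.
have := sqr_ge0 b; lra.
Qed.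

Lemma Re_conjM (z w : C) :
  complex.Re ((z^*)%C * w) = complex.Re z * complex.Re w + complex.Im z * complex.Im w.
Proof. by case: z => a b; case: w => c d /=; ring. Qed.

Lemma Re_conjM_le (z w : C) : complex.Re ((z^*)%C * w) <= cabs z * cabs w.
Proof. by rewrite -cabs_conj -cabsM Re_le_cabs. Qed.

Lemma Re_conjMC (z w : C) : complex.Re ((z^*)%C * w) = complex.Re ((w^*)%C * z).
Proof. by rewrite !Re_conjM mulrC [complex.Im w * _]mulrC. Qed.

Lemma Re_conj_self (z : C) : complex.Re ((z^*)%C * z) = cabs z ^+ 2.
Proof. by rewrite Re_conjM cabs2 !expr2. Qed.

Lemma ReD (z w : C) : complex.Re (z + w) = complex.Re z + complex.Re w.
Proof. by case: z; case: w. Qed.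

Lemma Re_sum (I : Type) (r : seq I) (P : pred I) (F : I -> C) :
  complex.Re (\sum_(i <- r | P i) F i) = \sum_(i <- r | P i) complex.Re (F i).
Proof. by apply: (big_morph _ ReD). Qed.

Lemma ImD (z w : C) : complex.Im (z + w) = complex.Im z + complex.Im w.
Proof. by case: z; case: w. Qed.

Lemma Im_sum (I : Type) (r : seq I) (P : pred I) (F : I -> C) :
  complex.Im (\sum_(i <- r | P i) F i) = \sum_(i <- r | P i) complex.Im (F i).
Proof. by apply: (big_morph _ ImD). Qed.


Local Notation Re := (@complex.Re R).
Local Notation Im := (@complex.Im R).

Definition ns {n : nat} (x : 'cV[C]_n) : R := \sum_(i < n) cabs (x i 0) ^+ 2.

Lemma ns_ge0 n (x : 'cV[C]_n) : 0 <= ns x.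
Proof. by apply: sumr_ge0 => i _; apply: sqr_ge0. Qed.

Lemma norm2_ge0 n (x : 'cV[C]_n) : 0 <= norm2 x.
Proof. exact: sqrtr_ge0. Qed.

Lemma norm2_sq n (x : 'cV[C]_n) : norm2 x ^+ 2 = ns x.
Proof. by rewrite /norm2 sqr_sqrtr // ns_ge0. Qed.

Lemma norm2E n (x : 'cV[C]_n) : norm2 x = Num.sqrt (ns x).
Proof. by []. Qed.

Lemma ns_eq0 n (x : 'cV[C]_n) : ns x = 0 -> x = 0.
Proof.
move=> /eqP; rewrite psumr_eq0; last by move=> i _; apply: sqr_ge0.
move=> /allP H; apply/matrixP => i j; rewrite (ord1 j) mxE.
have /H : i \in index_enum 'I_n by rewrite mem_index_enum.
by rewrite /= sqrf_eq0 cabs_eq0 => /eqP.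
Qed.

Lemma ns_coord n (x : 'cV[C]_n) i : cabs (x i 0) ^+ 2 <= ns x.
Proof.
rewrite /ns (bigD1 i) //= lerDl; apply: sumr_ge0 => k _; apply: sqr_ge0.
Qed.

Lemma cabs_le_norm2 n (x : 'cV[C]_n) i : cabs (x i 0) <= norm2 x.
Proof.
rewrite -(ler_pXn2r (_ : (0 < 2)%N)) ?nnegrE ?cabs_ge0 ?norm2_ge0 //.
by rewrite norm2_sq ns_coord.
Qed.

Lemma reipE n (v w : 'cV[C]_n) : reip v w = \sum_i Re ((v i 0)^*%C * w i 0).
Proof. by rewrite /reip Re_sum. Qed.

Lemma reip_self n (x : 'cV[C]_n) : reip x x = ns x.
Proof. by rewrite reipE; apply: eq_bigr => i _; rewrite Re_conj_self. Qed.

Lemma reipC n (v w : 'cV[C]_n) : reip v w = reip w v.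
Proof. by rewrite !reipE; apply: eq_bigr => i _; rewrite Re_conjMC. Qed.

Lemma reipDr n (u v w : 'cV[C]_n) : reip u (v + w) = reip u v + reip u w.
Proof.
rewrite !reipE -big_split; apply: eq_bigr => i _; rewrite !mxE mulrDr ReD //.
Qed.

Lemma reipDl n (u v w : 'cV[C]_n) : reip (v + w) u = reip v u + reip w u.
Proof. by rewrite reipC reipDr !(reipC u). Qed.

Lemma reipNr n (v w : 'cV[C]_n) : reip v (- w) = - reip v w.
Proof.
rewrite !reipE -sumrN; apply: eq_bigr => i _; rewrite !mxE.
by case: (v i 0) => a b; case: (w i 0) => c d /=; ring.
Qed.

Lemma reipNl n (v w : 'cV[C]_n) : reip (- v) w = - reip v w.
Proof. by rewrite reipC reipNr reipC. Qed.

Lemma reipBr n (u v w : 'cV[C]_n) : reip u (v - w) = reip u v - reip u w.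
Proof. by rewrite reipDr reipNr. Qed.

Lemma reipBl n (u v w : 'cV[C]_n) : reip (v - w) u = reip v u - reip w u.
Proof. by rewrite reipDl reipNl. Qed.

Lemma reipZr n (k : R) (v w : 'cV[C]_n) : reip v ((k%:C)%C *: w) = k * reip v w.
Proof.
rewrite !reipE mulr_sumr; apply: eq_bigr => i _; rewrite !mxE.
by case: (v i 0) => a b; case: (w i 0) => c d /=; ring.
Qed.

Lemma reipZl n (k : R) (v w : 'cV[C]_n) : reip ((k%:C)%C *: v) w = k * reip v w.
Proof. by rewrite reipC reipZr reipC. Qed.

Lemma reip0r n (v : 'cV[C]_n) : reip v 0 = 0.
Proof. by rewrite reipE big1 // => i _; rewrite mxE mulr0. Qed.

Lemma reip0l n (v : 'cV[C]_n) : reip 0 v = 0.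
Proof. by rewrite reipC reip0r. Qed.

Lemma nsD n (v w : 'cV[C]_n) : ns (v + w) = ns v + 2 * reip v w + ns w.
Proof.
rewrite -!reip_self !reipDl !reipDr (reipC w v); ring.
Qed.

Lemma nsB n (v w : 'cV[C]_n) : ns (v - w) = ns v - 2 * reip v w + ns w.
Proof.
rewrite -!reip_self !reipBl !reipBr (reipC w v); ring.
Qed.

Lemma nsN n (v : 'cV[C]_n) : ns (- v) = ns v.
Proof. by rewrite -!reip_self reipNl reipNr opprK. Qed.

Lemma nsZ n (k : C) (v : 'cV[C]_n) : ns (k *: v) = cabs k ^+ 2 * ns v.
Proof.
rewrite /ns mulr_sumr; apply: eq_bigr => i _; rewrite mxE cabsM; ring.
Qed.

Lemma CS n (v w : 'cV[C]_n) : reip v w <= norm2 v * norm2 w.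
Proof.
set a := norm2 v; set b := norm2 w.
have a0 : 0 <= a by apply: norm2_ge0.
have b0 : 0 <= b by apply: norm2_ge0.
have [av|] := eqVneq a 0.
  have : ns v = 0 by rewrite -norm2_sq -/a av expr0n.
  by move/ns_eq0 => ->; rewrite reip0l av mul0r.
have [bw|] := eqVneq b 0.
  have : ns w = 0 by rewrite -norm2_sq -/b bw expr0n.
  by move/ns_eq0 => ->; rewrite reip0r bw mulr0.
move=> bn0 an0.
have ap : 0 < a by rewrite lt_def an0 a0.
have bp : 0 < b by rewrite lt_def bn0 b0.
have := ns_ge0 ((b%:C)%C *: v - (a%:C)%C *: w).
rewrite nsB !nsZ reipZl reipZr !cabs_real !ger0_norm // -!norm2_sq -/a -/b.
move=> H.
have : 0 <= 2 * (a * b) * (a * b - reip v w) by nra.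
rewrite pmulr_rge0 ?subr_ge0 //; apply: mulr_gt0 => //; exact: mulr_gt0.
Qed.

End Basic.


Section Mx.
Variable R : realType.
Local Notation C := (complex R).
Local Notation Re := (@complex.Re R).
Local Notation Im := (@complex.Im R).

Lemma adjointE m n (A : 'M[C]_(m, n)) i j : adjoint A i j = ((A j i)^*)%C.
Proof. by rewrite !mxE. Qed.

Lemma adjoint_mul m n p (A : 'M[C]_(m, n)) (B : 'M[C]_(n, p)) :
  adjoint (A *m B) = adjoint B *m adjoint A.
Proof. by rewrite /adjoint trmx_mul map_mxM. Qed.

Lemma adjointK m n (A : 'M[C]_(m, n)) : adjoint (adjoint A) = A.
Proof.
apply/matrixP => i j; rewrite !mxE; exact: conjcK.
Qed.

Lemma adjointD m n (A B : 'M[C]_(m, n)) : adjoint (A + B) = adjoint A + adjoint B.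
Proof. by apply/matrixP => i j; rewrite !mxE rmorphD. Qed.

Lemma adjointN m n (A : 'M[C]_(m, n)) : adjoint (- A) = - adjoint A.
Proof. by apply/matrixP => i j; rewrite !mxE rmorphN. Qed.

Lemma adjointB m n (A B : 'M[C]_(m, n)) : adjoint (A - B) = adjoint A - adjoint B.
Proof. by rewrite adjointD adjointN. Qed.

Lemma reip_adj m n (A : 'M[C]_(m, n)) (z : 'cV[C]_n) (r : 'cV[C]_m) :
  reip (A *m z) r = reip z (adjoint A *m r).
Proof.
rewrite /reip; congr Re.
under eq_bigr => i _ do rewrite mxE rmorph_sum mulr_suml.
rewrite exchange_big /=; apply: eq_bigr => j _.
rewrite mxE mulr_sumr; apply: eq_bigr => i _.
by rewrite adjointE rmorphM mulrA [(_^*)%C * _]mulrC.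
Qed.

Lemma MP_unique n (M X Y : 'M[C]_n) : adjoint M = M ->
  is_MP_inverse M X -> is_MP_inverse M Y -> X = Y.
Proof.
move=> hM [X1 X2 X3 X4] [Y1 Y2 Y3 Y4].
have h3 : adjoint X *m M = M *m X by rewrite -X3 adjoint_mul hM.
have h4 : adjoint Y *m M = M *m Y by rewrite -Y3 adjoint_mul hM.
have h5 : M *m adjoint X = X *m M by rewrite -X4 adjoint_mul hM.
have h6 : M *m adjoint Y = Y *m M by rewrite -Y4 adjoint_mul hM.
have eM1 : M = M *m adjoint Y *m M by rewrite -{1}hM -{1}Y1 !adjoint_mul hM mulmxA.
have eM2 : M = M *m adjoint X *m M by rewrite -{1}hM -{1}X1 !adjoint_mul hM mulmxA.
have eX : X = X *m M *m Y.
  transitivity (X *m (adjoint X *m M)); first by rewrite h3 mulmxA X2.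
  transitivity (X *m (adjoint X *m (M *m adjoint Y *m M))); first by rewrite -eM1.
  rewrite !mulmxA -[X *m adjoint X *m M]mulmxA h3.
  rewrite -[X *m (M *m X) *m adjoint Y *m M]mulmxA h4.
  by rewrite !mulmxA X2.
have eY : Y = X *m M *m Y.
  transitivity (adjoint (Y *m M) *m Y); first by rewrite Y4 Y2.
  rewrite adjoint_mul hM.
  transitivity ((M *m adjoint X *m M) *m adjoint Y *m Y); first by rewrite -eM2.
  rewrite -[M *m adjoint X *m M *m adjoint Y]mulmxA h6 h5.
  by rewrite -!mulmxA [Y *m (M *m Y)]mulmxA Y2 !mulmxA.
by rewrite {1}eX -eY.
Qed.


Definition cmx m n (A : 'M[C]_(m, n)) := map_mx (@conjc R) A.

Lemma cmx_mul m n p (A : 'M[C]_(m, n)) (B : 'M[C]_(n, p)) :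
  cmx (A *m B) = cmx A *m cmx B.
Proof. by rewrite /cmx map_mxM. Qed.

Lemma cmx_adj m n (A : 'M[C]_(m, n)) : cmx (adjoint A) = adjoint (cmx A).
Proof. by apply/matrixP => i j; rewrite !mxE. Qed.

Lemma cmx_MP n (M X : 'M[C]_n) : is_MP_inverse M X -> is_MP_inverse (cmx M) (cmx X).
Proof.
case=> h1 h2 h3 h4; split.
- by rewrite -!cmx_mul h1.
- by rewrite -!cmx_mul h2.
- by rewrite -!cmx_mul -cmx_adj h3.
- by rewrite -!cmx_mul -cmx_adj h4.
Qed.

Lemma conj_eq_Im (z : C) : ((z^*)%C == z) = (Im z == 0).
Proof.
case: z => a b; rewrite /= eq_complex /= eqxx /=.
apply/idP/idP => /eqP h; apply/eqP; lra.
Qed.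

Lemma matF_cmx m n (A : 'M[C]_(m, n)) : matF true A <-> cmx A = A.
Proof.
split.
  by move=> h; apply/matrixP => i j; rewrite mxE; apply/eqP; rewrite conj_eq_Im; apply/eqP; apply: h.
by move=> h i j; rewrite /inF; apply/eqP; rewrite -conj_eq_Im -{2}h mxE.
Qed.

Lemma vecF_cmx n (x : 'cV[C]_n) : vecF true x <-> cmx x = x.
Proof.
split.
  by move=> h; apply/matrixP => i j; rewrite (ord1 j) mxE; apply/eqP; rewrite conj_eq_Im; apply/eqP; apply: h.
by move=> h i; rewrite /inF; apply/eqP; rewrite -conj_eq_Im -{2}h mxE.
Qed.

Lemma adjoint1 n : adjoint (1%:M : 'M[C]_n) = 1%:M.
Proof. by apply/matrixP => i j; rewrite !mxE rmorphMn rmorph1 eq_sym. Qed.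

Lemma mx_adj_eq0 m n (B : 'M[C]_(m, n)) : B *m adjoint B = 0 -> B = 0.
Proof.
move=> h; apply/matrixP => i k; rewrite mxE.
have : Re ((B *m adjoint B) i i) = 0 by rewrite h mxE.
rewrite mxE Re_sum.
under eq_bigr => j _ do rewrite adjointE mulrC Re_conj_self.
move/eqP; rewrite psumr_eq0; last by move=> j _; apply: sqr_ge0.
move/allP => H.
have /H : k \in index_enum 'I_n by rewrite mem_index_enum.
by rewrite /= sqrf_eq0 cabs_eq0 => /eqP.
Qed.

Section MPB.
Variables (m n : nat) (B : 'M[C]_(m, n)) (X : 'M[C]_n).
Hypothesis hX : is_MP_inverse (adjoint B *m B) X.

Lemma MP_herm : adjoint (adjoint B *m B) = adjoint B *m B.
Proof. by rewrite adjoint_mul adjointK. Qed.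

Lemma MP_support (b : 'cV[C]_m) :
  X *m adjoint B *m b = adjoint B *m (B *m (adjoint X *m (X *m (adjoint B *m b)))).
Proof.
case: hX => h1 h2 h3 h4.
have e : X = adjoint B *m B *m adjoint X *m X.
  by rewrite -{1}h2 -{1}h4 adjoint_mul MP_herm.
by rewrite {1}e !mulmxA.
Qed.

Lemma MP_normal (b : 'cV[C]_m) :
  adjoint B *m B *m (X *m adjoint B *m b) = adjoint B *m b.
Proof.
case: hX => h1 h2 h3 h4.
set M := adjoint B *m B.
set P := M *m X.
set D := (1%:M - P) *m adjoint B.
have hP : adjoint P = P by [].
have hD : D *m adjoint D = 0.
  rewrite /D adjoint_mul adjointK adjointB adjoint1 hP.
  have h1' : M *m X *m M = M := h1.
  rewrite -mulmxA [adjoint B *m _]mulmxA -/M mulmxBl mul1mx /P mulmxA h1' subrr.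
  done.

have D0 := mx_adj_eq0 hD.
have : D *m b = 0 by rewrite D0 mul0mx.
rewrite /D !mulmxBl mul1mx /P => /eqP; rewrite subr_eq0 => /eqP e.
by rewrite [in RHS]e !mulmxA.
Qed.

End MPB.

End Mx.


Section Beta.
Variable R : realType.
Local Notation C := (complex R).
Local Notation Re := (@complex.Re R).
Local Notation Im := (@complex.Im R).

Definition bset (realF : bool) m n (A : 'M[C]_(m, n)) (k : nat) : set R :=
  [set t : R | exists x : 'cV[C]_n,
        [/\ vecF realF x, x != 0, (cardv x <= k)%N & t = norm2 (A *m x) / norm2 x]].

Lemma betaE realF m n (A : 'M[C]_(m, n)) k : beta realF A k = inf (bset realF A k).
Proof. by []. Qed.

Lemma bset_lb realF m n (A : 'M[C]_(m, n)) k : lbound (bset realF A k) 0.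
Proof.
move=> t [x [_ _ _ ->]]; apply: divr_ge0; exact: norm2_ge0.
Qed.

Lemma beta_le realF m n (A : 'M[C]_(m, n)) k x : vecF realF x -> x != 0 ->
  (cardv x <= k)%N -> beta realF A k <= norm2 (A *m x) / norm2 x.
Proof.
move=> hx x0 hk; rewrite betaE; apply: ge_inf.
  by exists 0; apply: bset_lb.
by exists x.
Qed.

Lemma beta_ge0 realF m n (A : 'M[C]_(m, n)) k : 0 <= beta realF A k.
Proof.
rewrite betaE; have [->|ne] := eqVneq (bset realF A k) set0.
  by rewrite inf0.
apply: lb_le_inf; last exact: bset_lb.
by apply/set0P.
Qed.

Lemma beta_mono realF m n (A : 'M[C]_(m, n)) k N : (k <= N)%N ->
  (bset realF A k !=set0)%classic -> beta realF A N <= beta realF A k.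
Proof.
move=> kN ne; rewrite [beta _ _ k]betaE; apply: lb_le_inf => // t [x [h1 h2 h3 ->]].
by apply: beta_le => //; apply: leq_trans kN.
Qed.

Lemma norm2_eq0 n (x : 'cV[C]_n) : (norm2 x == 0) = (x == 0).
Proof.
apply/eqP/eqP => [h|->].
  by apply: ns_eq0; rewrite -norm2_sq h expr0n.
by rewrite /norm2 big1 ?sqrtr0 // => i _; rewrite mxE cabs0 expr0n.
Qed.

Lemma norm2_gt0 n (x : 'cV[C]_n) : x != 0 -> 0 < norm2 x.
Proof. by move=> h; rewrite lt_def norm2_eq0 h norm2_ge0. Qed.

Lemma beta_bound realF m n (A : 'M[C]_(m, n)) k x : vecF realF x ->
  (cardv x <= k)%N -> beta realF A k * norm2 x <= norm2 (A *m x).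
Proof.
move=> hx hk; have [->|x0] := eqVneq x 0.
  have -> : norm2 (0 : 'cV[C]_n) = 0 by apply/eqP; rewrite norm2_eq0.
  by rewrite mulr0 norm2_ge0.
have := beta_le A hx x0 hk.
by rewrite ler_pdivlMr ?norm2_gt0.
Qed.

Lemma beta_bound2 realF m n (A : 'M[C]_(m, n)) k x : vecF realF x ->
  (cardv x <= k)%N -> beta realF A k ^+ 2 * ns x <= ns (A *m x).
Proof.
move=> hx hk; rewrite -!norm2_sq -exprMn ler_pXn2r ?nnegrE ?norm2_ge0 //.
  exact: beta_bound.
by apply: mulr_ge0; [apply: beta_ge0 | apply: norm2_ge0].
Qed.

End Beta.


Section Oracle.
Variable R : realType.
Local Notation C := (complex R).
Local Notation Re := (@complex.Re R).
Local Notation Im := (@complex.Im R).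
Variables (m n : nat) (A : 'M[C]_(m, n)) (S : {set 'I_n}) (X : 'M[C]_n) (b : 'cV[C]_m).
Local Notation AS := (restrict_cols A S).
Hypothesis hX : is_MP_inverse (adjoint AS *m AS) X.
Local Notation xo := (X *m adjoint AS *m b).

Lemma xo_out j : j \notin S -> xo j 0 = 0.
Proof.
move=> hj; rewrite (MP_support hX) mxE big1 // => i _.
by rewrite adjointE mxE (negbTE hj) conjc0 mul0r.
Qed.

Lemma AS_eq (v : 'cV[C]_n) : (forall j, j \notin S -> v j 0 = 0) -> AS *m v = A *m v.
Proof.
move=> hv; apply/matrixP => i k; rewrite !mxE; apply: eq_bigr => j _.
rewrite mxE (ord1 k); case: ifP => // /negbT /hv ->; by rewrite !mulr0.
Qed.

Lemma adjAS j (r : 'cV[C]_m) : j \in S -> (adjoint AS *m r) j 0 = (adjoint A *m r) j 0.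
Proof.
move=> hj; rewrite !mxE; apply: eq_bigr => i _; by rewrite !adjointE mxE hj.
Qed.

Lemma normal_eq j : j \in S -> (adjoint A *m (b - A *m xo)) j 0 = 0.
Proof.
move=> hj; rewrite -adjAS // -(AS_eq xo_out) mulmxBr [adjoint AS *m (AS *m _)]mulmxA (MP_normal hX).
by rewrite subrr mxE.
Qed.

Lemma xo_real : matF true A -> vecF true b -> vecF true xo.
Proof.
move=> /matF_cmx hA /vecF_cmx hb; apply/vecF_cmx.
have hAS : cmx AS = AS.
  by apply/matrixP => i j; rewrite !mxE; case: ifP; rewrite ?conjc0 // => _; rewrite -[in RHS]hA mxE.
have hM : cmx (adjoint AS *m AS) = adjoint AS *m AS by rewrite cmx_mul cmx_adj hAS.
have hX' := cmx_MP hX; rewrite hM in hX'.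
have eX := MP_unique (MP_herm AS) hX hX'.
by rewrite !cmx_mul -eX cmx_adj hAS hb.
Qed.

End Oracle.


Section Scalar.
Variable R : realType.

Definition Qf (mu rho : R) := mu - (Num.max (Num.sqrt mu - rho) 0) ^+ 2.

Lemma Qf0 mu : 0 <= mu -> Qf mu 0 = 0.
Proof.
by move=> h; rewrite /Qf subr0 max_l ?sqrtr_ge0 // sqr_sqrtr // subrr.
Qed.

Lemma Qf_big mu rho : Num.sqrt mu <= rho -> Qf mu rho = mu.
Proof. by move=> h; rewrite /Qf max_r ?subr_le0 // expr0n subr0. Qed.

Lemma Qf_mid mu rho : rho <= Num.sqrt mu -> Qf mu rho = mu - (Num.sqrt mu - rho) ^+ 2.
Proof. by move=> h; rewrite /Qf max_l // subr_ge0. Qed.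

Lemma Qf_tangent mu rho rho' : 0 <= mu ->
  Qf mu rho' <= Qf mu rho + 2 * Num.max (Num.sqrt mu - rho) 0 * (rho' - rho).
Proof.
move=> hmu; rewrite /Qf; move: (Num.sqrt mu) => s.
have z2 : (0:R) ^+ 2 = 0 by rewrite expr2 mul0r.
case: (lerP rho s) => h1; case: (lerP rho' s) => h2.
- rewrite !max_l ?subr_ge0 //; have := sqr_ge0 (rho' - rho); nra.
- rewrite (max_r (_ : s - rho' <= 0)); last by rewrite subr_le0 ltW.
  rewrite max_l ?subr_ge0 //.
  have : 0 <= (s - rho) * (rho' - s) by apply: mulr_ge0; lra.
  have := sqr_ge0 (s - rho); rewrite z2; nra.
- rewrite (max_l (_ : 0 <= s - rho')) ?subr_ge0 //.
  rewrite max_r; last by rewrite subr_le0 ltW.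
  have := sqr_ge0 (s - rho'); rewrite z2; nra.
- rewrite !max_r; try by rewrite subr_le0 ltW.
  rewrite z2; nra.
Qed.

End Scalar.


Section Vec.
Variable R : realType.
Local Notation C := (complex R).
Local Notation Re := (@complex.Re R).
Local Notation Im := (@complex.Im R).

Lemma vecF_add realF n (x y : 'cV[C]_n) : vecF realF x -> vecF realF y -> vecF realF (x + y).
Proof.
case: realF => // hx hy i; rewrite /inF mxE ImD.
by have := hx i; have := hy i; rewrite /inF => -> ->; rewrite addr0.
Qed.

Lemma vecF_opp realF n (x : 'cV[C]_n) : vecF realF x -> vecF realF (- x).
Proof.
case: realF => // hx i; rewrite /inF mxE.
by have := hx i; rewrite /inF; case: (x i 0) => a b /= ->; rewrite oppr0.
Qed.

Lemma vecF_sub realF n (x y : 'cV[C]_n) : vecF realF x -> vecF realF y -> vecF realF (x - y).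
Proof. by move=> hx hy; apply: vecF_add => //; apply: vecF_opp. Qed.

Lemma vecF_scale realF n (t : R) (x : 'cV[C]_n) : vecF realF x -> vecF realF ((t%:C)%C *: x).
Proof.
case: realF => // hx i; rewrite /inF mxE.
by have := hx i; rewrite /inF; case: (x i 0) => a b /= ->; rewrite mulr0 mul0r addr0.
Qed.

Lemma vecF0 realF n : vecF realF (0 : 'cV[C]_n).
Proof. by case: realF => // i; rewrite /inF mxE. Qed.

Definition dvec n (j : 'I_n) (w : C) : 'cV[C]_n := w *: delta_mx j 0.

Lemma dvecE n (j : 'I_n) w i : dvec j w i 0 = if i == j then w else 0.
Proof. by rewrite /dvec !mxE eqxx andbT; case: (i == j); rewrite ?mulr1 ?mulr0. Qed.

Lemma vecF_dvec realF n (j : 'I_n) w : inF realF w -> vecF realF (dvec j w).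
Proof.
case: realF => // hw i; rewrite /inF dvecE; case: (i == j) => //.
Qed.

Lemma ns_dvec n (j : 'I_n) w : ns (dvec j w) = cabs w ^+ 2.
Proof.
rewrite /ns (bigD1 j) //= big1 ?addr0; first by rewrite dvecE eqxx.
by move=> i /negbTE hi; rewrite dvecE hi cabs0 expr0n.
Qed.

Lemma reip_dvec n (j : 'I_n) w (v : 'cV[C]_n) : reip (dvec j w) v = Re ((w^*)%C * v j 0).
Proof.
rewrite reipE (bigD1 j) //= big1 ?addr0; first by rewrite dvecE eqxx.
by move=> i /negbTE hi; rewrite dvecE hi conjc0 mul0r.
Qed.

Lemma supp_dvec n (j : 'I_n) w : w != 0 -> supp (dvec j w) = [set j].
Proof.
move=> hw; apply/setP => i; rewrite !inE dvecE.
by case: (i == j); rewrite ?hw ?eqxx.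
Qed.

Lemma cardv_dvec n (j : 'I_n) w : w != 0 -> cardv (dvec j w) = 1%N.
Proof. by move=> hw; rewrite /cardv supp_dvec // cards1. Qed.

Lemma mul_dvec m n (A : 'M[C]_(m, n)) j w : A *m dvec j w = w *: col j A.
Proof. by rewrite /dvec -scalemxAr colE. Qed.

Lemma col_ns m n (A : 'M[C]_(m, n)) j : colnorm A <= 1 -> ns (col j A) <= 1.
Proof.
move=> h; rewrite -norm2_sq -(expr1n _ 2) ler_pXn2r ?nnegrE ?norm2_ge0 //.
apply: le_trans h; rewrite /colnorm; exact: (le_bigmax (0 : R) (fun j => norm2 (col j A)) j).
Qed.

Lemma ns_mul_dvec m n (A : 'M[C]_(m, n)) j w : colnorm A <= 1 ->
  ns (A *m dvec j w) <= cabs w ^+ 2.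
Proof.
move=> h; rewrite mul_dvec nsZ -{2}(mulr1 (cabs w ^+ 2)).
by apply: ler_wpM2l; [apply: sqr_ge0 | apply: col_ns].
Qed.

Lemma Re_c_le m n (A : 'M[C]_(m, n)) (r : 'cV[C]_m) j w : colnorm A <= 1 ->
  Re ((w^*)%C * (adjoint A *m r) j 0) <= cabs w * norm2 r.
Proof.
move=> h; rewrite -reip_dvec -reip_adj.
apply: le_trans (CS _ _) _; apply: ler_wpM2r; first exact: norm2_ge0.
rewrite -(ler_pXn2r (_ : (0 < 2)%N)) ?nnegrE ?norm2_ge0 ?cabs_ge0 //.
by rewrite norm2_sq ns_mul_dvec.
Qed.

Lemma vec_neq0 n (x : 'cV[C]_n) : x != 0 -> exists j, x j 0 != 0.
Proof.
move=> hx; apply/existsP; apply: contraR hx; rewrite negb_exists => /forallP h.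
apply/eqP/matrixP => i k; rewrite (ord1 k) mxE; exact/eqP/negPn/h.
Qed.

Lemma cardvE n (x : 'cV[C]_n) : (cardv x)%:R = \sum_j ((x j 0 != 0)%:R : R).
Proof.
rewrite /cardv -sum1_card natr_sum big_mkcond /=; apply: eq_bigr => i _.
by rewrite inE; case: (x i 0 != 0).
Qed.

Lemma sum_pos (I : eqType) (r : seq I) (F : I -> R) : (forall i, 0 <= F i) ->
  (exists2 i, i \in r & 0 < F i) -> 0 < \sum_(i <- r) F i.
Proof.
elim: r => [|a r IH] hF [i hi Fi]; first by [].
rewrite big_cons; move: hi; rewrite inE => /orP [/eqP <-|hi].
  by apply: ltr_wpDr => //; apply: sumr_ge0.
by apply: ltr_wpDl => //; apply: IH => //; exists i.
Qed.

End Vec.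


Section Main.
Variable R : realType.
Local Notation C := (complex R).
Local Notation Re := (@complex.Re R).
Local Notation Im := (@complex.Im R).
Variables (realF : bool) (m n : nat) (A : 'M[C]_(m, n)) (mu : R) (x0 : 'cV[C]_n)
  (eps b : 'cV[C]_m) (N : nat) (X : 'M[C]_n).
Hypotheses (hA : matF realF A) (hx0 : vecF realF x0) (heps : vecF realF eps)
  (hcol : colnorm A <= 1) (hmu : 0 < mu) (hb : b = A *m x0 + eps)
  (hN : (2 * cardv x0 <= N)%N) (hbeta : 0 < beta realF A N)
  (heps2 : norm2 eps < beta realF A N ^+ 2 * Num.sqrt mu)
  (hx0big : forall j, j \in supp x0 ->
     ((beta realF A N ^+ 2)^-1 + 1) * Num.sqrt mu < cabs (x0 j 0))
  (hX : is_MP_inverse (adjoint (restrict_cols A (supp x0)) *m restrict_cols A (supp x0)) X).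

Local Notation S := (supp x0).
Local Notation K := (cardv x0).
Local Notation AS := (restrict_cols A S).
Local Notation xo := (X *m adjoint AS *m b).
Local Notation bt := (beta realF A N).
Local Notation r := (b - A *m xo).
Local Notation c j := ((adjoint A *m (b - A *m xo)) j 0).
Local Notation e := (norm2 (b - A *m xo)).
Local Notation sm := (Num.sqrt mu).

Lemma KN : (K <= N)%N.
Proof. by apply: leq_trans hN; rewrite leq_pmull. Qed.

Lemma beta_le1 : bt <= 1.
Proof.
have ne : bset realF A N != set0.
  by apply/eqP => e0; move: hbeta; rewrite betaE e0 inf0 ltxx.
case/set0P: ne => t [x [hx xn0 hxN _]].
case: (vec_neq0 xn0) => j hj.
have hcx : (1 <= cardv x)%N.
  by apply/card_gt0P; exists j; rewrite inE.
have d0 : dvec j (1 : C) != 0.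
  apply/eqP => /matrixP /(_ j 0); rewrite dvecE eqxx mxE => /eqP; apply/negP; exact: oner_neq0.
have i1 : inF realF (1 : C) by case: realF.
have := @beta_le _ realF _ _ A N _ (vecF_dvec j i1) d0.
rewrite cardv_dvec ?oner_neq0 // => /(_ (leq_trans hcx hxN)) h.
apply: le_trans h _.
rewrite [norm2 (dvec _ _)]norm2E ns_dvec cabs_real normr1 expr1n sqrtr1 divr1 norm2E.
rewrite -(sqrtr1 R) ler_wsqrtr //.
by apply: le_trans (ns_mul_dvec j 1 hcol) _; rewrite cabs_real normr1 expr1n.
Qed.

Lemma bt_gt0 : 0 < bt. Proof. exact: hbeta. Qed.

Lemma sm_gt0 : 0 < sm. Proof. by rewrite sqrtr_gt0. Qed.

Lemma sm2 : sm ^+ 2 = mu. Proof. by rewrite sqr_sqrtr // ltW. Qed.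

Lemma xo_outS j : j \notin S -> xo j 0 = 0.
Proof. move=> hj. have := @xo_out R m n A (supp x0) X b hX j hj. done. Qed.

Lemma c_S j : j \in S -> c j = 0.
Proof. move=> hj. have := @normal_eq R m n A (supp x0) X b hX j hj. done. Qed.

Lemma x0_out j : j \notin S -> x0 j 0 = 0.
Proof. by rewrite inE negbK => /eqP. Qed.

Lemma vecF_mul realF' p q (B : 'M[C]_(p, q)) (x : 'cV[C]_q) :
  matF realF' B -> vecF realF' x -> vecF realF' (B *m x).
Proof.
case: realF' => // /matF_cmx hB /vecF_cmx hx; apply/vecF_cmx.
by rewrite cmx_mul hB hx.
Qed.

Lemma vecF_b : vecF realF b.
Proof. by rewrite hb; apply: vecF_add => //; apply: vecF_mul. Qed.

Lemma xo_vecF : vecF realF xo.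
Proof.
case: realF hA vecF_b => // hA' hb'.
exact: (xo_real hX hA' hb').
Qed.

Lemma Re_c j w : Re ((w^*)%C * c j) <= cabs w * e.
Proof. exact: Re_c_le. Qed.

Lemma reip_Ar (z : 'cV[C]_n) : reip (A *m z) r = \sum_j Re ((z j 0)^*%C * c j).
Proof. by rewrite reip_adj reipE. Qed.

Local Notation w := (xo - x0).

Lemma w_out j : j \notin S -> w j 0 = 0.
Proof. by move=> hj; rewrite mxE [X in _ + X]mxE xo_outS // x0_out // subrr. Qed.

Lemma reip_Aw : reip (A *m w) r = 0.
Proof.
rewrite reip_Ar big1 // => j _; case: (boolP (j \in S)) => hj.
  by rewrite c_S // mulr0.
by rewrite w_out // conjc0 mul0r.
Qed.

Lemma eps_decomp : eps = r + A *m w.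
Proof. by rewrite hb mulmxBr; rewrite addrC; rewrite !addrA subrK addrC addKr. Qed.

Lemma ns_eps : ns eps = ns r + ns (A *m w).
Proof. by rewrite {1}eps_decomp nsD reipC reip_Aw mulr0 addr0. Qed.

Lemma card_w : (cardv w <= K)%N.
Proof.
rewrite /cardv; apply: subset_leq_card; apply/fintype.subsetP => j; rewrite !inE; apply: contraNN.
by move/eqP => h; rewrite w_out ?inE ?h ?eqxx.
Qed.

Lemma vecF_w : vecF realF w.
Proof. by apply: vecF_sub => //; apply: xo_vecF. Qed.

Lemma w_bound : bt * norm2 w <= norm2 eps.
Proof.
apply: le_trans (beta_bound A vecF_w (leq_trans card_w KN)) _.
rewrite !norm2E ler_wsqrtr // ns_eps lerDr; exact: ns_ge0.
Qed.

Lemma e_le : e <= norm2 eps.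
Proof. by rewrite !norm2E ler_wsqrtr // ns_eps lerDl ns_ge0. Qed.

Lemma e_lt : e < bt ^+ 2 * sm.
Proof. exact: le_lt_trans e_le heps2. Qed.

Lemma norm2w_lt : norm2 w < sm.
Proof.
have b1 := beta_le1; have b0 := bt_gt0; have := w_bound; have := heps2.
have := norm2_ge0 w; have := sm_gt0.
move=> h1 h2 h3 h4.
have h5 : bt * norm2 w < bt * sm.
  apply: le_lt_trans h4 _; apply: lt_le_trans h3 _.
  rewrite expr2 -mulrA ler_pM2l //; rewrite -{2}(mul1r sm); apply: ler_wpM2r; lra.
by rewrite ltr_pM2l in h5.
Qed.

Lemma xo_big j : j \in S -> sm < bt ^+ 2 * cabs (xo j 0).
Proof.
move=> hj; have := hx0big hj.
have h1 : cabs (x0 j 0) <= cabs (xo j 0) + cabs (w j 0).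
  have wE : w j 0 = xo j 0 - x0 j 0 by rewrite mxE [X in _ + X]mxE.
  have -> : x0 j 0 = xo j 0 - w j 0 by rewrite wE; ring.
  by apply: le_trans (cabsD _ _) _; rewrite cabsN.
have h2 := le_lt_trans (cabs_le_norm2 w j) norm2w_lt.
have b0 : 0 < bt ^+ 2 by rewrite exprn_gt0 // bt_gt0.
move=> h3.
have h4 : bt ^- 2 * sm < cabs (xo j 0) by lra.
by rewrite -(ltr_pM2l b0) mulrA mulfV ?mul1r // gt_eqF in h4.
Qed.

Lemma xo_gt j : j \in S -> sm < cabs (xo j 0).
Proof.
move=> hj; apply: lt_le_trans (xo_big hj) _.
have b1 := beta_le1; have b0 := bt_gt0.
rewrite -{2}(mul1r (cabs (xo j 0))); apply: ler_wpM2r; first exact: cabs_ge0.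
by rewrite expr_le1 // ltW.
Qed.

Lemma supp_xo : supp xo = S.
Proof.
apply/setP => j; case: (boolP (j \in S)) => hj.
  rewrite inE -cabs_eq0; apply/negP => /eqP h; have := xo_gt hj; rewrite h.
  by move/(lt_trans sm_gt0); rewrite ltxx.
by rewrite inE xo_outS // eqxx.
Qed.

Lemma card_xo : cardv xo = K.
Proof. by rewrite /cardv supp_xo. Qed.


Lemma norm_concl : norm2 w <= norm2 eps / beta realF A K.
Proof.
have [w0|wn0] := eqVneq w 0.
  rewrite w0; have -> : norm2 (0 : 'cV[C]_n) = 0 by apply/eqP; rewrite norm2_eq0.
  by apply: divr_ge0; [apply: norm2_ge0 | apply: beta_ge0].
have ne : (bset realF A K !=set0)%classic.
  by exists (norm2 (A *m w) / norm2 w); exists w; split => //; [apply: vecF_w | apply: card_w].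
have hbK : bt <= beta realF A K by apply: beta_mono KN ne.
have bK0 : 0 < beta realF A K by apply: lt_le_trans bt_gt0 hbK.
rewrite ler_pdivlMr // mulrC; apply: le_trans (beta_bound A vecF_w card_w) _.
rewrite !norm2E ler_wsqrtr // ns_eps lerDr; exact: ns_ge0.
Qed.

Lemma nsr_lt : ns r < mu.
Proof.
have h1 : ns r <= ns eps by rewrite ns_eps lerDl ns_ge0.
apply: le_lt_trans h1 _; rewrite -norm2_sq.
have b1 := beta_le1; have b0 := bt_gt0; have s0 := sm_gt0.
have h2 : norm2 eps ^+ 2 < (bt ^+ 2 * sm) ^+ 2.
  by rewrite ltr_pXn2r ?nnegrE ?norm2_ge0 // mulr_ge0 // ?sqr_ge0 // ltW.
apply: lt_le_trans h2 _; rewrite exprMn sm2 -{2}(mul1r mu); apply: ler_wpM2r.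
  exact: ltW.
rewrite -exprM expr_le1 //; exact: ltW.
Qed.

Lemma Kfun_xo : Kfun A b mu xo = mu * K%:R + ns r.
Proof. by rewrite /Kfun card_xo norm2_sq -opprB nsN. Qed.

Definition hK j (v : C) : R :=
  mu * ((v != 0)%:R - (j \in S)%:R) + bt ^+ 2 * cabs (v - xo j 0) ^+ 2
  - 2 * Re (((v - xo j 0)^*)%C * c j).

Lemma hK_pos j v : 0 <= hK j v /\ (v - xo j 0 != 0 -> 0 < hK j v).
Proof.
have b1 := beta_le1; have b0 := bt_gt0; have s0 := sm_gt0; have el := e_lt.
have ms : mu = sm * sm by rewrite -expr2 sm2.
rewrite /hK; case: (boolP (j \in S)) => hj.
  rewrite c_S // mulr0 mulr0 subr0 /=.
  have xb := xo_big hj; have xg := xo_gt hj.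
  case: (eqVneq v 0) => [->|vn0] /=.
    rewrite !sub0r mulrN1 cabsN; set s := cabs (xo j 0) in xb xg *.
    have h : mu < bt ^+ 2 * s ^+ 2.
      have s0' : 0 < s by apply: lt_trans s0 xg.
      have h1 : sm * s < (bt ^+ 2 * s) * s by rewrite ltr_pM2r.
      have h2 : sm * sm < sm * s by rewrite ltr_pM2l.
      have -> : bt ^+ 2 * s ^+ 2 = (bt ^+ 2 * s) * s by ring.
      rewrite ms; exact: lt_trans h2 h1.
    by split; [|move=> _]; lra.
  rewrite subrr mulr0 add0r; split; first by apply: mulr_ge0; [apply: sqr_ge0|apply: sqr_ge0].
  move=> zn0; apply: mulr_gt0; first by apply: exprn_gt0.
  by rewrite exprn_gt0 // lt_def cabs_eq0 zn0 cabs_ge0.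
rewrite xo_outS // subr0 subr0 /=.
case: (eqVneq v 0) => [->|vn0].
  have z2 : (0:R) ^+ 2 = 0 by rewrite expr2 mul0r.
  by rewrite conjc0 mul0r cabs0; split => //=; rewrite mulr0n z2 !mulr0 add0r subr0.
have hRe := Re_c j v.
have ρ0 : 0 < cabs v by rewrite lt_def cabs_eq0 vn0 cabs_ge0.
set ρ := cabs v in hRe ρ0 *.
have hq : 0 <= bt ^+ 2 * (ρ - sm) ^+ 2 + mu * (1 - bt ^+ 2).
  apply: addr_ge0; apply: mulr_ge0; try exact: sqr_ge0; first exact: ltW.
  rewrite subr_ge0 expr_le1 //; exact: ltW.
have hpos : 0 < mu + bt ^+ 2 * ρ ^+ 2 - 2 * Re ((v^*)%C * c j).
  have : ρ * e < ρ * (bt ^+ 2 * sm) by rewrite ltr_pM2l.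
  move=> h.
  have e2 : bt ^+ 2 * (ρ - sm) ^+ 2 = bt ^+ 2 * ρ ^+ 2 - 2 * (ρ * (bt ^+ 2 * sm)) + bt ^+ 2 * (sm * sm).
    by ring.
  nra.
rewrite /= mulr1; split; [exact: ltW | by move=> _].
Qed.

Lemma sum_hK (y : 'cV[C]_n) : \sum_j hK j (y j 0) =
  mu * (cardv y)%:R - mu * K%:R + bt ^+ 2 * ns (y - xo) - 2 * reip (A *m (y - xo)) r.
Proof.
rewrite reip_Ar /ns !cardvE !mulr_sumr -!sumrB -big_split /= -sumrB.
apply: eq_bigr => j _; rewrite /hK inE !mxE; ring.
Qed.

Lemma Ay_b (y : 'cV[C]_n) : A *m y - b = A *m (y - xo) - r.
Proof. by rewrite mulmxBr opprB addrA subrK. Qed.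

Lemma Kfun_y (y : 'cV[C]_n) : Kfun A b mu y =
  mu * (cardv y)%:R + (ns (A *m (y - xo)) - 2 * reip (A *m (y - xo)) r + ns r).
Proof. by rewrite /Kfun norm2_sq Ay_b nsB. Qed.

Lemma card_sub (y z : 'cV[C]_n) : (cardv (y - z) <= cardv y + cardv z)%N.
Proof.
rewrite /cardv; apply: leq_trans (leq_card_setU _ _).1.
apply: subset_leq_card; apply/fintype.subsetP => j; rewrite !inE mxE [X in _ + X]mxE.
apply: contraR; rewrite negb_or !negbK => /andP [/eqP -> /eqP ->]; by rewrite subrr.
Qed.

Lemma Kfun_strict (y : 'cV[C]_n) : vecF realF y -> y != xo -> Kfun A b mu xo < Kfun A b mu y.
Proof.
move=> hy yn; rewrite Kfun_xo Kfun_y.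
have nr := nsr_lt.
case: (leqP (K.+1) (cardv y)) => hc.
  have h1 : mu * (K.+1)%:R <= mu * (cardv y)%:R by rewrite ler_pM2l // ler_nat.
  have h2 : 0 <= ns (A *m (y - xo)) - 2 * reip (A *m (y - xo)) r + ns r.
    by rewrite -nsB -Ay_b; apply: ns_ge0.
  rewrite -addn1 natrD mulrDr mulr1 in h1; lra.
have hz : (cardv (y - xo) <= N)%N.
  apply: leq_trans (card_sub _ _) _; rewrite card_xo; apply: leq_trans hN.
  by rewrite mul2n -addnn leq_add2r -ltnS.
have hv : vecF realF (y - xo) by apply: vecF_sub => //; apply: xo_vecF.
have hb2 := beta_bound2 A hv hz.
have hpos : 0 < \sum_j hK j (y j 0).
  apply: sum_pos; first by move=> j; case: (hK_pos j (y j 0)).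
  have : y - xo != 0 by rewrite subr_eq0.
  case/vec_neq0 => j hj; exists j; first by rewrite mem_index_enum.
  by case: (hK_pos j (y j 0)) => _; apply; rewrite mxE [X in _ + X]mxE in hj.
rewrite sum_hK in hpos; lra.
Qed.

Lemma KregE (y : 'cV[C]_n) : Kreg A b mu y = Q2card mu y + ns (A *m y - b).
Proof. by rewrite /Kreg norm2_sq. Qed.

Lemma Q2E (y : 'cV[C]_n) : Q2card mu y = \sum_j Qf mu (cabs (y j 0)).
Proof. by []. Qed.

Lemma Kreg_eq (y : 'cV[C]_n) : (forall j, y j 0 = 0 \/ sm <= cabs (y j 0)) ->
  Kreg A b mu y = Kfun A b mu y.
Proof.
move=> h; rewrite /Kreg /Kfun Q2E cardvE mulr_sumr; congr (_ + _).
apply: eq_bigr => j _; case: (h j) => [->|hj].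
  by rewrite cabs0 Qf0 ?ltW // eqxx mulr0.
have -> : (y j 0 != 0) = true.
  apply/negP => /eqP h0.
  by move: hj; rewrite h0 cabs0 leNgt sm_gt0.
by rewrite Qf_big // mulr1.
Qed.

Lemma Kreg_xo : Kreg A b mu xo = Kfun A b mu xo.
Proof.
apply: Kreg_eq => j; case: (boolP (j \in S)) => hj.
  by right; apply: ltW; apply: xo_gt.
by left; apply: xo_outS.
Qed.

Lemma ns_comb (p q : 'cV[C]_m) (l : R) :
  ns (p + (l%:C)%C *: q) = ns p + 2 * l * reip p q + l ^+ 2 * ns q.
Proof. by rewrite nsD reipZr nsZ cabs_real real_normK ?num_real // mulrA. Qed.

Lemma inF_mulr (z : C) (k : R) : inF realF z -> inF realF (z * (k%:C)%C).
Proof.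
by case: realF => //; rewrite /inF; case: z => a b' /= ->; rewrite mul0r mulr0 addr0.
Qed.

Definition mid (y : 'cV[C]_n) : {set 'I_n} :=
  [set j | (0 < cabs (y j 0)) && (cabs (y j 0) < sm)].

Section Step.
Variables (y : 'cV[C]_n) (j : 'I_n).
Hypotheses (hy : vecF realF y) (hj : j \in mid y).
Local Notation ρ := (cabs (y j 0)).
Local Notation l := (cabs (y j 0) / sm).
Local Notation k := (sm / cabs (y j 0)).
Local Notation d := (dvec j (y j 0 * ((sm / cabs (y j 0))%:C)%C)).
Local Notation y0 := (y - dvec j (y j 0)).
Local Notation y1 := (y - dvec j (y j 0) + dvec j (y j 0 * ((sm / cabs (y j 0))%:C)%C)).

Lemma hρ : 0 < ρ /\ ρ < sm.
Proof. by move: hj; rewrite inE => /andP. Qed.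

Lemma y0E i : y0 i 0 = if i == j then 0 else y i 0.
Proof.
rewrite mxE [X in _ + X]mxE dvecE; case: (eqVneq i j) => [->|_].
  by rewrite subrr. by rewrite subr0.
Qed.

Lemma y1E i : y1 i 0 = if i == j then y j 0 * ((sm / cabs (y j 0))%:C)%C else y i 0.
Proof.
rewrite mxE y0E dvecE; case: (eqVneq i j) => _; by rewrite ?add0r ?addr0.
Qed.

Lemma cabs_y1j : cabs (y j 0 * ((sm / cabs (y j 0))%:C)%C) = sm.
Proof.
case: hρ => h1 h2; rewrite cabsM cabs_real ger0_norm; last first.
  by apply: divr_ge0; apply: ltW => //; apply: sm_gt0.
by rewrite mulrC -mulrA mulVf ?mulr1 // gt_eqF.
Qed.

Lemma yE : y = y0 + ((l%:C)%C) *: d.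
Proof.
case: hρ => h1 h2.
apply/matrixP => i q; rewrite (ord1 q) mxE y0E [X in _ + X]mxE dvecE.
case: (eqVneq i j) => [->|_]; last by rewrite mulr0 addr0.
rewrite add0r mulrCA -rmorphM /=.
have -> : cabs (y j 0) / sm * (sm / cabs (y j 0)) = 1.
  by rewrite mulrA divfK ?mulfV // gt_eqF // sm_gt0.
by rewrite mulr1.
Qed.

Lemma mid_y0 : mid y0 = mid y :\ j.
Proof.
apply/setP => i; rewrite !inE y0E; case: (eqVneq i j) => [->|_] //=.
by rewrite cabs0 ltxx.
Qed.

Lemma mid_y1 : mid y1 = mid y :\ j.
Proof.
apply/setP => i; rewrite !inE y1E; case: (eqVneq i j) => [->|_] //=.
by rewrite cabs_y1j ltxx andbF.
Qed.

Lemma card_mid0 : #|mid y0| = #|mid y|.-1.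
Proof. by rewrite mid_y0 [#|mid y|](cardsD1 j) hj. Qed.

Lemma card_mid1 : #|mid y1| = #|mid y|.-1.
Proof. by rewrite mid_y1 [#|mid y|](cardsD1 j) hj. Qed.

Lemma vecF_y0 : vecF realF y0.
Proof. by apply: vecF_sub => //; apply: vecF_dvec; apply: hy. Qed.

Lemma vecF_y1 : vecF realF y1.
Proof. by apply: vecF_add; [apply: vecF_y0 | apply: vecF_dvec; apply: inF_mulr; apply: hy]. Qed.

Lemma y1_neq : y1 != xo.
Proof.
apply/eqP => e; have := y1E j; rewrite e eqxx => /(congr1 (@cabs R)); rewrite cabs_y1j.
case: (boolP (j \in S)) => hjS.
  by move=> h; have := xo_gt hjS; rewrite h ltxx.
by rewrite xo_outS // cabs0 => h; have := sm_gt0; rewrite h ltxx.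
Qed.

Lemma Kreg_comb : (1 - l) * Kreg A b mu y0 + l * Kreg A b mu y1 <= Kreg A b mu y.
Proof.
case: hρ => h1 h2; have s0 := sm_gt0.
set T := \sum_(i | i != j) Qf mu (cabs (y i 0)).
have Q0 : Q2card mu y0 = T.
  rewrite Q2E (bigD1 j) //= y0E eqxx cabs0 Qf0 ?ltW // add0r.
  by apply: eq_bigr => i /negbTE hi; rewrite y0E hi.
have Q1 : Q2card mu y1 = mu + T.
  rewrite Q2E (bigD1 j) //= y1E eqxx cabs_y1j Qf_big //.
  by congr (_ + _); apply: eq_bigr => i /negbTE hi; rewrite y1E hi.
have Qy : Q2card mu y = mu * (2 * l - l ^+ 2) + T.
  rewrite Q2E (bigD1 j) //= Qf_mid ?(ltW h2) //; congr (_ + _).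
  have key : forall s' : R, 0 < s' -> s' ^+ 2 = mu ->
      mu - (s' - cabs (y j 0)) ^+ 2 = mu * (2 * (cabs (y j 0) / s') - (cabs (y j 0) / s') ^+ 2).
    move=> s' hs <-; field; exact: lt0r_neq0.
  exact: key sm_gt0 sm2.
set p := A *m y0 - b; set q := A *m d.
have eAy : A *m y - b = p + ((l%:C)%C) *: q.
  by rewrite {1}yE mulmxDr -scalemxAr /p /q addrAC.
have eAy1 : A *m y1 - b = p + q by rewrite mulmxDr /p /q addrAC.
have hq : ns q <= mu by rewrite -sm2 -cabs_y1j; apply: ns_mul_dvec.
have l0 : 0 < l by apply: divr_gt0.
have l1 : l < 1 by rewrite ltr_pdivrMr // mul1r.
rewrite !KregE.
rewrite Q0.
rewrite Q1.
rewrite Qy.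
rewrite eAy.
rewrite eAy1.
rewrite (ns_comb p q).
rewrite (nsD p q).
move: (ns p) (reip p q) (ns q) (ns_ge0 q) hq l0 l1; move: (cabs (y j 0) / sm) => L a bb cc c0 hq l0 l1.
have H : 0 <= (L - L ^+ 2) * (mu - cc).
  by apply: mulr_ge0; rewrite subr_ge0 // expr2 ger_pMr //; apply: ltW.
lra.
Qed.

End Step.

Lemma Kreg_strict_k k : forall y : 'cV[C]_n, #|mid y| = k -> vecF realF y -> y != xo ->
  Kreg A b mu xo < Kreg A b mu y.
Proof.
elim: k => [|k IH] y hk hy hyx.
  rewrite Kreg_xo Kreg_eq; first exact: Kfun_strict.
  move=> j; have : j \notin mid y by rewrite (cards0_eq hk) inE.
  rewrite inE negb_and -!leNgt; case/orP => h.
    by left; apply/eqP; rewrite -cabs_eq0 eq_le h cabs_ge0.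
  by right.
have : (0 < #|mid y|)%N by rewrite hk.
case/card_gt0P => j hj.
have [h1 h2] := hρ hj.
have l0 : 0 < cabs (y j 0) / sm by apply: divr_gt0 => //; apply: sm_gt0.
have l1 : cabs (y j 0) / sm < 1 by rewrite ltr_pdivrMr ?mul1r //; apply: sm_gt0.
have c0 : #|mid (y - dvec j (y j 0))| = k by rewrite card_mid0 // hk.
have c1 : #|mid (y - dvec j (y j 0) + dvec j (y j 0 * ((sm / cabs (y j 0))%:C)%C))| = k.
  by rewrite card_mid1 // hk.
have K1 := IH _ c1 (vecF_y1 j hy) (y1_neq hj).
have K0 : Kreg A b mu xo <= Kreg A b mu (y - dvec j (y j 0)).
  case: (eqVneq (y - dvec j (y j 0)) xo) => [->|ne]; first exact: lexx.
  by apply: ltW; apply: IH c0 (vecF_y0 j hy) ne.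
have H := Kreg_comb hj.
move: K0 K1 l0 l1 H; move: (cabs (y j 0) / sm) => L.
set a := Kreg A b mu xo; set a' := Kreg A b mu y.
set a0 := Kreg A b mu (y - dvec j (y j 0)).
set a1 := Kreg A b mu (_ + _).
move=> K0 K1 l0 l1 H.
have P1 : 0 <= (1 - L) * (a0 - a) by apply: mulr_ge0; lra.
have P2 : 0 < L * (a1 - a) by apply: mulr_gt0; lra.
lra.
Qed.

Lemma Kreg_strict (y : 'cV[C]_n) : vecF realF y -> y != xo -> Kreg A b mu xo < Kreg A b mu y.
Proof. exact: Kreg_strict_k. Qed.

Definition gK j (v : C) : R :=
  2 * Num.max (sm - cabs v) 0 * (cabs (xo j 0) - cabs v)
  + 2 * Re (((v - xo j 0)^*)%C * c j) - 2 * (bt ^+ 2 * cabs (v - xo j 0) ^+ 2).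

Lemma gK_neg j v : gK j v <= 0 /\ (v - xo j 0 != 0 -> gK j v < 0).
Proof.
have b1 := beta_le1; have b0 := bt_gt0; have s0 := sm_gt0; have el := e_lt.
have bb1 : bt ^+ 2 <= 1 by rewrite expr_le1 //; exact: ltW.
have bb0 : 0 < bt ^+ 2 by apply: exprn_gt0.
rewrite /gK; case: (boolP (j \in S)) => hj.
  rewrite c_S // mulr0 mulr0 addr0.
  have xb := xo_big hj; have xg := xo_gt hj.
  have tri : cabs (xo j 0) <= cabs v + cabs (v - xo j 0).
    have := cabsD v (- (v - xo j 0)); rewrite cabsN.
    by rewrite opprB [v + _]addrC subrK.
  set s := cabs (xo j 0) in xb xg tri *; set ρ := cabs v in tri *.
  set z := cabs (v - xo j 0) in tri *.
  have z0 : 0 <= z by apply: cabs_ge0.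
  have r0 : 0 <= ρ by apply: cabs_ge0.
  case: (lerP sm ρ) => hr.
    rewrite max_r; last by rewrite subr_le0.
    rewrite mulr0 mul0r add0r.
    split; first by rewrite oppr_le0; apply: mulr_ge0 => //; apply: mulr_ge0; [exact: ltW | exact: sqr_ge0].
    move=> zn0; rewrite oppr_lt0; apply: mulr_gt0 => //; apply: mulr_gt0 => //.
    by apply: exprn_gt0; rewrite lt_def cabs_eq0 zn0 cabs_ge0.
  rewrite max_l ?subr_ge0 ?(ltW hr) //.
  have h1 : s - ρ <= z by lra.
  have h2 : 0 < s - ρ by lra.
  have h3 : (sm - ρ) - bt ^+ 2 * (s - ρ) < 0.
    have : bt ^+ 2 * ρ <= ρ by rewrite -{2}(mul1r ρ) ler_wpM2r.
    lra.
  have h4 : (s - ρ) * ((sm - ρ) - bt ^+ 2 * (s - ρ)) < 0 by rewrite pmulr_rlt0.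
  have h5 : bt ^+ 2 * (s - ρ) ^+ 2 <= bt ^+ 2 * z ^+ 2.
    by rewrite ler_pM2l // ler_pXn2r ?nnegrE // ltW.
  have hg : 2 * (sm - ρ) * (s - ρ) - 2 * (bt ^+ 2 * z ^+ 2) < 0.
    have e : 2 * (sm - ρ) * (s - ρ) = 2 * ((s - ρ) * ((sm - ρ) - bt ^+ 2 * (s - ρ))) + 2 * (bt ^+ 2 * (s - ρ) ^+ 2) by ring.
    rewrite e; lra.
  by split => [|_]; [apply: ltW|].
rewrite xo_outS // !subr0 cabs0 sub0r.
have hRe := Re_c j v.
set ρ := cabs v in hRe *.
have r0 : 0 <= ρ by apply: cabs_ge0.
have key : bt ^+ 2 * sm <= Num.max (sm - ρ) 0 + bt ^+ 2 * ρ.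
  case: (lerP sm ρ) => hr.
    rewrite max_r ?subr_le0 // add0r ler_pM2l //.
  rewrite max_l ?subr_ge0 ?(ltW hr) //.
  have : bt ^+ 2 * (sm - ρ) <= sm - ρ by rewrite -{2}(mul1r (sm - ρ)) ler_wpM2r // subr_ge0 ltW.
  lra.
have hm : 0 <= Num.max (sm - ρ) 0 by rewrite le_max lexx orbT.
have E : 2 * Num.max (sm - ρ) 0 * - ρ + 2 * Re ((v^*)%C * c j) - 2 * (bt ^+ 2 * ρ ^+ 2)
  <= 2 * ρ * (e - (Num.max (sm - ρ) 0 + bt ^+ 2 * ρ)).
  have -> : 2 * ρ * (e - (Num.max (sm - ρ) 0 + bt ^+ 2 * ρ)) =
    2 * Num.max (sm - ρ) 0 * - ρ + 2 * (ρ * e) - 2 * (bt ^+ 2 * ρ ^+ 2) by ring.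
  lra.
have F : e - (Num.max (sm - ρ) 0 + bt ^+ 2 * ρ) < 0 by lra.
split.
  apply: le_trans E _; rewrite -mulrA; apply: mulr_ge0_le0 => //.
  by apply: mulr_ge0_le0 => //; exact: ltW.
move=> vn0; apply: le_lt_trans E _.
have r0' : 0 < ρ by rewrite lt_def cabs_eq0 vn0 r0.
by rewrite -mulrA pmulr_rlt0 // pmulr_rlt0.
Qed.

Lemma sum_gK (y : 'cV[C]_n) : \sum_j gK j (y j 0) =
  \sum_j (2 * Num.max (sm - cabs (y j 0)) 0 * (cabs (xo j 0) - cabs (y j 0)))
  + 2 * reip (A *m (y - xo)) r - 2 * (bt ^+ 2 * ns (y - xo)).
Proof.
rewrite reip_Ar /ns !mulr_sumr -big_split /= -sumrB.
apply: eq_bigr => j _; rewrite /gK !mxE; ring.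
Qed.

Lemma cabs_interp (u v : C) (t : R) : 0 <= t <= 1 ->
  cabs (u - (t%:C)%C * (u - v)) <= (1 - t) * cabs u + t * cabs v.
Proof.
case/andP => t0 t1.
have -> : u - (t%:C)%C * (u - v) = ((1 - t)%:C)%C * u + (t%:C)%C * v.
  by rewrite rmorphB rmorph1 /=; ring.
apply: le_trans (cabsD _ _) _; rewrite !cabsM !cabs_real !ger0_norm //.
by rewrite subr_ge0.
Qed.

Lemma Kreg_dir (y : 'cV[C]_n) (t : R) : vecF realF y -> (cardv (y - xo) <= N)%N ->
  0 <= t <= 1 ->
  Kreg A b mu (y - (t%:C)%C *: (y - xo)) - Kreg A b mu y <=
  t * \sum_j gK j (y j 0) + t ^+ 2 * ns (A *m (y - xo)).
Proof.
move=> hy hN' ht; have /andP [t0 t1] := ht.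
have hv : vecF realF (y - xo) by apply: vecF_sub => //; apply: xo_vecF.
have hb2 := beta_bound2 A hv hN'.
rewrite !KregE sum_gK.
have HQ : Q2card mu (y - (t%:C)%C *: (y - xo)) - Q2card mu y <=
    t * \sum_j (2 * Num.max (sm - cabs (y j 0)) 0 * (cabs (xo j 0) - cabs (y j 0))).
  rewrite !Q2E -sumrB mulr_sumr; apply: ler_sum => j _.
  have -> : (y - (t%:C)%C *: (y - xo)) j 0 = y j 0 - (t%:C)%C * (y j 0 - xo j 0).
    by rewrite !mxE.
  have T := Qf_tangent (cabs (y j 0)) (cabs (y j 0 - (t%:C)%C * (y j 0 - xo j 0))) (ltW hmu).
  have I := cabs_interp (y j 0) (xo j 0) ht.
  have hm : 0 <= Num.max (sm - cabs (y j 0)) 0 by rewrite le_max lexx orbT.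
  have : 2 * Num.max (sm - cabs (y j 0)) 0 * (cabs (y j 0 - (t%:C)%C * (y j 0 - xo j 0)) - cabs (y j 0))
      <= 2 * Num.max (sm - cabs (y j 0)) 0 * (t * (cabs (xo j 0) - cabs (y j 0))).
    apply: ler_wpM2l; first by apply: mulr_ge0.
    lra.
  move: T; set M := Num.max _ _; move=> T H.
  have -> : t * (2 * M * (cabs (xo j 0) - cabs (y j 0))) =
    2 * M * (t * (cabs (xo j 0) - cabs (y j 0))) by ring.
  lra.
have eA : A *m (y - (t%:C)%C *: (y - xo)) - b = (A *m y - b) + ((- t)%:C)%C *: (A *m (y - xo)).
  by rewrite mulmxBr -scalemxAr rmorphN scaleNr addrAC.
rewrite eA ns_comb Ay_b reipBl reip_self (reipC r).
move: HQ hb2; move: (Q2card _ _) (Q2card _ _) (\sum_(j < n) _) => q1 q2 sQ.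
move: (ns (A *m (y - xo))) (ns (y - xo)) (reip (A *m (y - xo)) r) (ns (A *m (y - xo) - r)) => a1 a2 a3 a4.
move=> HQ hb2.
have hb3 : t * (bt ^+ 2 * a2) <= t * a1 by apply: ler_wpM2l.
have E : (-t) ^+ 2 = t ^+ 2 by rewrite sqrrN.
rewrite E; lra.
Qed.

Lemma norm2_scale (k : R) (x : 'cV[C]_n) : norm2 ((k%:C)%C *: x) = `|k| * norm2 x.
Proof.
rewrite !norm2E nsZ cabs_real sqrtrM ?sqr_ge0 // sqrtr_sqr normr_id //.
Qed.

Lemma stat_concl (y : 'cV[C]_n) : stationary realF (Kreg A b mu) y -> y <> xo ->
  (N - K < cardv y)%N.
Proof.
move=> [hy [_ hF]] hyx; rewrite ltnNge; apply/negP => hc.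
have hz : (cardv (y - xo) <= N)%N.
  apply: leq_trans (card_sub _ _) _; rewrite card_xo.
  by rewrite -(subnK KN) leq_add2r.
have zn0 : y - xo != 0 by rewrite subr_eq0; apply/eqP.
set G := \sum_j gK j (y j 0).
have G0 : G < 0.
  have : 0 < \sum_j - gK j (y j 0).
    apply: sum_pos; first by move=> j; rewrite oppr_ge0; case: (gK_neg j (y j 0)).
    case/vec_neq0: zn0 => j hj; exists j; first by rewrite mem_index_enum.
    by rewrite oppr_gt0; case: (gK_neg j (y j 0)) => _; apply; rewrite mxE [X in _ + X]mxE in hj.
  by rewrite sumrN oppr_gt0.
set z := y - xo in hz zn0 *.
have nz0 : 0 < norm2 z by apply: norm2_gt0.
set a := ns (A *m z).
have a0 : 0 <= a by apply: ns_ge0.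
set eps0 := - G / (2 * norm2 z).
have e0 : 0 < eps0 by apply: divr_gt0; [rewrite oppr_gt0 | apply: mulr_gt0].
have [δ δ0 Hδ] := hF eps0 e0.
set u := - G / (2 * (a + 1)).
have u0 : 0 < u by apply: divr_gt0; [rewrite oppr_gt0 | apply: mulr_gt0 => //; lra].
set v := δ / (2 * norm2 z).
have v0 : 0 < v by apply: divr_gt0 => //; apply: mulr_gt0.
set t := Num.min (1 / 2) (Num.min v u).
have t0 : 0 < t by rewrite !lt_min u0 v0 andbT andbT; apply: divr_gt0.
have t1 : t <= 1 by rewrite ge_min; apply/orP; left; rewrite ler_pdivrMr // mul1r; lra.
have tv : t <= v by rewrite ge_min ge_min lexx orbT.
have tu : t <= u by rewrite ge_min ge_min lexx !orbT.
have hy' : vecF realF (y - (t%:C)%C *: z).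
  by apply: vecF_sub => //; apply: vecF_scale; apply: vecF_sub => //; apply: xo_vecF.
have nd : norm2 (y - (t%:C)%C *: z - y) = t * norm2 z.
  rewrite addrAC subrr add0r -scaleNr -rmorphN norm2_scale normrN ger0_norm //.
  exact: ltW.
have tnz : 0 < t * norm2 z by apply: mulr_gt0.
have tnzd : t * norm2 z < δ.
  have : t * norm2 z <= v * norm2 z by rewrite ler_pM2r.
  have -> : v * norm2 z = δ / 2 by rewrite /v; field; apply: lt0r_neq0.
  lra.
have := Hδ _ hy'; rewrite nd tnz tnzd => /(_ isT).
rewrite reip0l subr0 ler_pdivlMr //.
have -> : - eps0 * (t * norm2 z) = t * G / 2 by rewrite /eps0; field; apply: lt0r_neq0.
move=> H1.
have H2 := Kreg_dir hy hz (_ : 0 <= t <= 1).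
have H2' : Kreg A b mu (y - (t%:C)%C *: z) - Kreg A b mu y <= t * G + t ^+ 2 * a.
  by apply: H2; rewrite (ltW t0) t1.
have ua : u * a < - G / 2.
  have : u * (a + 1) = - G / 2 by rewrite /u; field; apply: lt0r_neq0; lra.
  lra.
have ta : t * a <= u * a by apply: ler_wpM2r.
have tt : t * (t * a) < t * (- G / 2) by rewrite ltr_pM2l //; lra.
have E : t ^+ 2 * a = t * (t * a) by rewrite expr2 mulrA.
have C1 : t * G / 2 <= t * G + t * (t * a) by rewrite -E; exact: le_trans H1 H2'.
have C2 : t * G + t * (t * a) < t * G + t * (- G / 2) by rewrite ltrD2l.
have C3 : t * G + t * (- G / 2) = t * G / 2 by field.
by have := le_lt_trans C1 C2; rewrite C3 ltxx.
Qed.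

Lemma main_result :
  let x' := X *m adjoint (restrict_cols A (supp x0)) *m b in
  [/\ unique_global_minimizer realF (Kreg A b mu) x',
      unique_global_minimizer realF (Kfun A b mu) x',
      supp x' = supp x0,
      norm2 (x' - x0) <= norm2 eps / beta realF A (cardv x0) &
      forall x'', stationary realF (Kreg A b mu) x'' -> x'' <> x' ->
        (N - cardv x0 < cardv x'')%N].
Proof.
move=> x'; split.
- split; first exact: xo_vecF.
  by move=> y hy hyx; apply: Kreg_strict => //; apply/eqP.
- split; first exact: xo_vecF.
  by move=> y hy hyx; apply: Kfun_strict => //; apply/eqP.
- exact: supp_xo.
- exact: norm_concl.
- by move=> y hs hyx; apply: stat_concl.
Qed.

End Main.

Unset Implicit Arguments.

Theorem theorem4p8 (R : realType) (realF : bool) (m n : nat)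
  (A : 'M[complex R]_(m, n)) (mu : R) (x0 : 'cV[complex R]_n)
  (eps : 'cV[complex R]_m) (b : 'cV[complex R]_m) (N : nat)
  (X : 'M[complex R]_n) :
  matF realF A -> vecF realF x0 -> vecF realF eps ->
  colnorm A <= 1 ->
  0 < mu ->
  b = A *m x0 + eps ->
  (2 * cardv x0 <= N)%N ->
  0 < beta realF A N ->
  norm2 eps < beta realF A N ^+ 2 * Num.sqrt mu ->
  (forall j, j \in supp x0 ->
     ((beta realF A N ^+ 2)^-1 + 1) * Num.sqrt mu < cabs (x0 j 0)) ->
  is_MP_inverse (adjoint (restrict_cols A (supp x0)) *m restrict_cols A (supp x0)) X ->
  let x' := X *m adjoint (restrict_cols A (supp x0)) *m b in
  [/\ unique_global_minimizer realF (Kreg A b mu) x',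
      unique_global_minimizer realF (Kfun A b mu) x',
      supp x' = supp x0,
      norm2 (x' - x0) <= norm2 eps / beta realF A (cardv x0) &
      forall x'', stationary realF (Kreg A b mu) x'' -> x'' <> x' ->
        (N - cardv x0 < cardv x'')%N].
Proof.
move=> hA hx0 heps hcol hmu hb hN hbeta heps2 hbig hX.
exact: main_result.
Qed.
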